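(* A rooted labeled forest that avoids $123$ avoids $3142$ if and only if it is a $P_2$-forest.
   Context: Rooted labeled forests are unordered forests with a distinguished root in each component and distinct integer labels $L(v)$. The ancestors of $v$ are the vertices on the path from the root of its component to $v$ (including $v$). An instance of a pattern $\pi$ of length $k$ is a sequence $v_1,\dots,v_k$ with $v_i$ a strict ancestor of $v_{i+1}$ and labels in the same relative order as $\pi$; a forest avoids $\pi$ if it has no instance. A vertex $v$ is a top-down minimum (TDM) if $L(u)\ge L(v)$ for every ancestor $u$ of $v$; other vertices are non-TDM. For a non-TDM vertex $v$, its segment is the set of TDM ancestors $u$ of $v$ with $L(u)<L(v)$ (these are the TDM vertices on the path from some vertex down to $v$); the top of the segment is the vertex of the segment closest to the root (equivalently, the one with the greatest label). Two vertices are comparable if one is an ancestor of the other. A $P_2$-forest is a forest in which, whenever two comparable non-TDM vertices have intersecting segments, the tops of their segments coincide. *)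

(* Defs.v *)
From mathcomp Require Import all_boot all_order all_algebra.
Set Implicit Arguments. Unset Strict Implicit. Unset Printing Implicit Defensive.
Import Order.TTheory GRing.Theory Num.Theory.

(* A rooted labeled forest on a finite vertex type V is given by a parent map
   par : V -> option V (None = root of its component) which is well founded
   (iterating the parent map from any vertex reaches None), together with an
   injective labelling L : V -> int. *)

Section Forest.
Variables (V : finType) (par : V -> option V) (L : V -> int).

Definition pstep (o : option V) : option V := obind par o.

Definition forest_wf : Prop := forall v : V, exists k, iter k pstep (Some v) = None.

Definition anc (u v : V) : Prop := exists k, iter k pstep (Some v) = Some u.

Definition strict_anc (u v : V) : Prop :=
  exists k, 0 < k /\ iter k pstep (Some v) = Some u.

Definition comparable (u v : V) : Prop := anc u v \/ anc v u.

Definition instance (pi : seq nat) (f : 'I_(size pi) -> V) : Prop :=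
  (forall i j : 'I_(size pi), val j = (val i).+1 -> strict_anc (f i) (f j)) /\
  (forall i j : 'I_(size pi), (L (f i) < L (f j))%R = (nth 0 pi i < nth 0 pi j)%N).

Definition avoids (pi : seq nat) : Prop := forall f : 'I_(size pi) -> V, ~ @instance pi f.

Definition TDM (v : V) : Prop := forall u, anc u v -> (L v <= L u)%R.

Definition segment (v : V) (u : V) : Prop := TDM u /\ anc u v /\ (L u < L v)%R.

Definition seg_top (v t : V) : Prop := segment v t /\ forall u, segment v u -> anc t u.

Definition P2_forest : Prop :=
  forall v w : V, ~ TDM v -> ~ TDM w -> comparable v w ->
    (exists u, segment v u /\ segment w u) ->
    forall t1 t2, seg_top v t1 -> seg_top w t2 -> t1 = t2.

End Forest.
Arguments instance {V} par L pi f.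

(* Main.v *)
Require Import Defs.
From mathcomp Require Import all_boot all_order all_algebra zify.
From Stdlib Require Import Classical.
Set Implicit Arguments. Unset Strict Implicit. Unset Printing Implicit Defensive.
Import Order.TTheory GRing.Theory Num.Theory.
Local Open Scope ring_scope.

Lemma seq_min (T : eqType) (F : T -> int) (P : T -> Prop) (s : seq T) :
  (exists x, x \in s /\ P x) ->
  exists m, P m /\ forall u, u \in s -> P u -> F m <= F u.
Proof.
elim: s => [|a s IH]; first by case=> x [].
case=> x [xin Px].
case: (classic (exists y, y \in s /\ P y)) => [/IH [m [Pm Hm]]|nex].
  case: (classic (P a)) => Pa.
    case: (lerP (F m) (F a)) => Hma.
      exists m; split => // u; rewrite in_cons => /orP [/eqP->|/Hm] //.
    exists a; split => // u; rewrite in_cons => /orP [/eqP->|uin Pu] //.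
    by apply: le_trans (ltW Hma) (Hm u uin Pu).
  exists m; split => // u; rewrite in_cons => /orP [/eqP->|/Hm] //.
exists a.
have xa : x = a.
  move: xin; rewrite in_cons => /orP [/eqP//|xs]; by case: nex; exists x.
subst x; split => // u; rewrite in_cons => /orP [/eqP->|uin Pu] //.
by case: nex; exists u.
Qed.

Lemma fin_min (T : finType) (F : T -> int) (P : T -> Prop) :
  (exists x, P x) -> exists m, P m /\ forall u, P u -> F m <= F u.
Proof.
case=> x Px; have [|m [Pm Hm]] := @seq_min _ F P (enum T).
  by exists x; rewrite mem_enum.
by exists m; split => // u; apply: Hm; rewrite mem_enum.
Qed.

Lemma fin_max (T : finType) (F : T -> int) (P : T -> Prop) :
  (exists x, P x) -> exists m, P m /\ forall u, P u -> F u <= F m.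
Proof.
move=> ex; have [m [Pm Hm]] := @fin_min T (fun x => - F x) P ex.
by exists m; split => // u /Hm; rewrite lerN2.
Qed.

Section S.
Variables (V : finType) (par : V -> option V) (L : V -> int).
Hypothesis wf : forest_wf par.
Hypothesis Linj : injective L.

Lemma anc_refl x : anc par x x. Proof. by exists 0%N. Qed.
Lemma anc_trans x y z : anc par x y -> anc par y z -> anc par x z.
Proof. by case=> k1 H1 [k2 H2]; exists (k1 + k2)%N; rewrite iterD H2. Qed.

Lemma iter_None k : iter k (pstep par) None = None.
Proof. by elim: k => //= k ->. Qed.

Lemma iter_ge k m o : (k <= m)%N -> iter k (pstep par) o = None -> iter m (pstep par) o = None.
Proof. by move=> km H; rewrite -(subnK km) iterD H iter_None. Qed.

Lemma anc_total x y b : anc par x b -> anc par y b -> anc par x y \/ anc par y x.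
Proof.
case=> k1 H1 [k2 H2]; case: (leqP k1 k2) => h.
  by right; exists (k2 - k1)%N; rewrite -H1 -iterD subnK.
by left; exists (k1 - k2)%N; rewrite -H2 -iterD subnK // ltnW.
Qed.

Lemma iter_cycle k x : iter k (pstep par) (Some x) = Some x -> forall n, iter (n * k) (pstep par) (Some x) = Some x.
Proof. move=> H; elim=> // n IH; by rewrite mulSn iterD IH. Qed.

Lemma anc_antisym x y : anc par x y -> anc par y x -> x = y.
Proof.
case=> k1 H1 [k2 H2].
have C : iter (k2 + k1) (pstep par) (Some y) = Some y by rewrite iterD H1 H2.
case: (wf y) => k Hk.
case: (posnP (k2 + k1)) => [/eqP|pos].
  rewrite addn_eq0 => /andP [_ /eqP e]; by move: H1; rewrite e => -[].
have := iter_cycle C k; rewrite (@iter_ge k) //.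
by rewrite -{1}(muln1 k) leq_mul2l pos orbT.
Qed.

Lemma strictP x y : strict_anc par x y <-> anc par x y /\ x <> y.
Proof.
split.
  case=> k [kp H]; split; first by exists k.
  move=> e; subst y.
  case: (wf x) => n Hn; have := iter_cycle H n; rewrite (@iter_ge n) //.
  by rewrite -{1}(muln1 n) leq_mul2l kp orbT.
case=> -[[|k] H] ne; first by case: ne; case: H.
by exists k.+1.
Qed.


Lemma ltF (x y : int) : y < x -> (x < y) = false.
Proof. by move=> h; apply/negbTE; rewrite -leNgt ltW. Qed.
Lemma ltT (x y : int) : x < y -> (x < y) = true.
Proof. by []. Qed.
Lemma ltRefl (x : int) : (x < x) = false.
Proof. by rewrite ltxx. Qed.

Lemma mk123 x y z : strict_anc par x y -> strict_anc par y z ->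
  L x < L y -> L y < L z -> ~ avoids par L [:: 1; 2; 3]%N.
Proof.
move=> sxy syz lxy lyz av.
apply: (av (fun i : 'I_3 => nth x [:: x; y; z] i)); split.
  move=> [[|[|[|i]]] Hi] [[|[|[|j]]] Hj] //= e; try by [].
  all: try by case: e.
  all: try exact: sxy.
  all: try exact: syz.
have lxz := lt_trans lxy lyz.
move=> [[|[|[|i]]] Hi] [[|[|[|j]]] Hj] //=.
all: first [ by rewrite ltxx | by apply: ltF | by [] ].
Qed.

Lemma mk3142 a b c d : strict_anc par a b -> strict_anc par b c -> strict_anc par c d ->
  L b < L d -> L d < L a -> L a < L c -> ~ avoids par L [:: 3; 1; 4; 2]%N.
Proof.
move=> sab sbc scd lbd lda lac av.
apply: (av (fun i : 'I_4 => nth a [:: a; b; c; d] i)); split.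
  move=> [[|[|[|[|i]]]] Hi] [[|[|[|[|j]]]] Hj] //= e; try by [].
  all: try by case: e.
have lba := lt_trans lbd lda; have ldc := lt_trans lda lac; have lbc := lt_trans lba lac.
move=> [[|[|[|[|i]]]] Hi] [[|[|[|[|j]]]] Hj] //=.
all: first [ by rewrite ltxx | by apply: ltF | by [] ].
Qed.

Lemma get3142 : ~ avoids par L [:: 3; 1; 4; 2]%N -> exists a b c d,
  [/\ strict_anc par a b, strict_anc par b c, strict_anc par c d &
  [/\ L b < L d, L d < L a & L a < L c]].
Proof.
move=> nav; apply: NNPP => nex; apply: nav => f [Hs Hl].
apply: nex.
pose o0 := @Ordinal 4 0 isT; pose o1 := @Ordinal 4 1 isT.
pose o2 := @Ordinal 4 2 isT; pose o3 := @Ordinal 4 3 isT.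
exists (f o0), (f o1), (f o2), (f o3); split.
- exact: (Hs o0 o1).
- exact: (Hs o1 o2).
- exact: (Hs o2 o3).
split.
- by rewrite (Hl o1 o3).
- by rewrite (Hl o3 o0).
- by rewrite (Hl o0 o2).
Qed.

Lemma tdm_ne x y : TDM par L x -> ~ TDM par L y -> x <> y.
Proof. by move=> Tx nTy e; subst. Qed.

Lemma min_anc v : exists m, anc par m v /\ TDM par L m /\ L m <= L v.
Proof.
have [m [mv Hm]] := @fin_min V L (fun u => anc par u v) (ex_intro (fun u => anc par u v) v (anc_refl v)).
exists m; split => //; split; last exact: Hm (anc_refl _).
by move=> u um; apply: Hm; apply: anc_trans um mv.
Qed.

Lemma top_ex v : (exists u, segment par L v u) -> exists t, seg_top par L v t.
Proof.
move=> ex; have [t [st Ht]] := @fin_max V L (segment par L v) ex.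
exists t; split => // u su.
case: (anc_total st.2.1 su.2.1) => // ut.
have e : L t = L u by apply/eqP; rewrite eq_le Ht // andbT; apply: st.1.
by rewrite (Linj e); apply: anc_refl.
Qed.

Lemma key v w u t1 t2 : avoids par L [:: 1; 2; 3]%N -> avoids par L [:: 3; 1; 4; 2]%N ->
  ~ TDM par L v -> ~ TDM par L w -> anc par v w -> segment par L v u -> segment par L w u ->
  seg_top par L v t1 -> seg_top par L w t2 -> t1 = t2.
Proof.
move=> a123 a3142 nv nw vw sv sw st1 st2.
move: (sv) (sw) (st1) (st2) => [Tu [uv luv]] [_ [uw luw]] [[T1 [t1v l1]] H1] [[T2 [t2w l2]] H2].
have t1u := H1 u sv; have t2u := H2 u sw.
have t2v := anc_trans t2u uv.
case: (eqVneq t1 t2) => // /eqP ne; exfalso.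
case: (anc_total t1u t2u) => [a12|a21].
- have lw1 : L w < L t1.
    case: (ltrP (L t1) (L w)) => h.
      have s : segment par L w t1 by split => //; split => //; apply: anc_trans t1v vw.
      by case: ne; apply: anc_antisym a12 (H2 _ s).
    rewrite lt_neqAle h andbT; apply/eqP => e.
    by apply: (tdm_ne T1 nw); apply: Linj.
  have vne : v <> w by move=> e; subst; move: (lt_trans lw1 l1); rewrite ltxx.
  apply: (@mk3142 t1 t2 v w) => //; apply/strictP => //; split => //.
  exact: tdm_ne T2 nv.
- have lv2 : L v < L t2.
    case: (ltrP (L t2) (L v)) => h.
      have s : segment par L v t2 by split => //; split.
      by case: ne; symmetry; apply: anc_antisym a21 (H1 _ s).
    rewrite lt_neqAle h andbT; apply/eqP => e.
    by apply: (tdm_ne T2 nv); apply: Linj.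
  have lvw := lt_trans lv2 l2.
  have vne : v <> w by move=> e; subst; move: lvw; rewrite ltxx.
  apply: (@mk123 t1 v w) => //; apply/strictP => //; split => //.
  exact: tdm_ne T1 nv.
Qed.

End S.

Theorem lemma3p15 (V : finType) (par : V -> option V) (L : V -> int) :
  forest_wf par -> injective L ->
  avoids par L [:: 1; 2; 3]%N ->
  (avoids par L [:: 3; 1; 4; 2]%N <-> P2_forest par L).
Proof.
move=> wf Linj a123; split.
  move=> a3142 v w nv nw [vw|wv] [u [sv sw]] t1 t2 st1 st2.
    exact: (key wf Linj a123 a3142 nv nw vw sv sw st1 st2).
  by symmetry; apply: (key wf Linj a123 a3142 nw nv wv sw sv st2 st1).
move=> P2; apply: NNPP => /get3142 [a [b [c [d [sab sbc scd [lbd lda lac]]]]]].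
move/(strictP wf): sab => [ab _]; move/(strictP wf): sbc => [bc _].
move/(strictP wf): scd => [cd _].
have lbc := lt_trans lbd (lt_trans lda lac).
have nc : ~ TDM par L c by move=> Tc; move: (Tc b bc); rewrite leNgt lbc.
have bd := anc_trans bc cd.
have nd : ~ TDM par L d by move=> Td; move: (Td b bd); rewrite leNgt lbd.
have [p [pb [Tp lp]]] := min_anc par L b.
have spc : segment par L c p.
  by split => //; split; [apply: anc_trans pb bc | apply: le_lt_trans lp lbc].
have spd : segment par L d p.
  by split => //; split; [apply: anc_trans pb bd | apply: le_lt_trans lp lbd].
have [t1 st1] := top_ex Linj (ex_intro _ p spc).
have [t2 st2] := top_ex Linj (ex_intro _ p spd).
have e := P2 c d nc nd (or_introl cd) (ex_intro _ p (conj spc spd)) t1 t2 st1 st2.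
subst t2.
have [q [qa [Tq lq]]] := min_anc par L a.
have ac := anc_trans ab bc.
have sqc : segment par L c q.
  by split => //; split; [exact: anc_trans qa ac | apply: le_lt_trans lq lac].
have t1a := anc_trans (st1.2 q sqc) qa.
have lt1a := lt_trans st2.1.2.2 lda.
apply: (@mk123 V par L t1 a c) => //; apply/(strictP wf); split => //.
  by move=> e; subst; move: lt1a; rewrite ltxx.
by move=> e; subst; move: lac; rewrite ltxx.
Qed.
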